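(* Let $1\le m\le k-1$, $K=\{1,\dots,k\}$, $T\subseteq K$ with $|T|=m$, and let $\mathcal{V}=\{\bm v_1,\dots,\bm v_{m-1}\}$ be $m-1$ distinct points of $PG(k-1,q)$ with $\mathrm{supp}(\bm v_i)\cap T=\emptyset$ for all $i$. Then the set $M=X^T\cup Y^T_{\mathcal V}\cup Z^T$ is a $(k-m)$-block over $\mathbb{F}_q$; that is, every $m$-dimensional linear subspace of $\mathbb{F}_q^k$ contains (a representing vector of) at least one point of $M$.
   Context: Points of $PG(k-1,q)$ are one-dimensional subspaces of $\mathbb{F}_q^k$, identified with any nonzero representing vector; the support $\mathrm{supp}(\bm x)=\{i:x_i\neq0\}$ of a point is well defined. $\bm e_i$ denotes the $i$-th standard unit vector of $\mathbb{F}_q^k$. Define $X^T=\{\bm x\in PG(k-1,q): \mathrm{supp}(\bm x)\cap T=\emptyset\}$; $Y^T_{\mathcal V}=\{\bm x\in PG(k-1,q): |\mathrm{supp}(\bm x)\cap T|=1\}$ minus all points represented by $\bm v_i+\lambda\bm e_j$ with $\bm v_i\in\mathcal V$, $j\in T$, $\lambda\in\mathbb{F}_q\setminus\{0\}$; $Z^T=\{\bm x\in PG(k-1,q): \mathrm{supp}(\bm x)\text{ is a 2-element subset of }T\}$. For $1\le r\le k-1$, a set $M$ of points of $PG(k-1,q)$ is an $r$-block if every $(k-r)$-dimensional linear subspace of $\mathbb{F}_q^k$ contains at least one point of $M$. *)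

(* Defs.v *)
(* Points of PG(k-1,q) are represented by nonzero row vectors
   in 'rV[F]_k; all predicates below are invariant under nonzero scaling. *)
From HB Require Import structures.
From mathcomp Require Import all_boot all_order all_algebra.
Set Implicit Arguments. Unset Strict Implicit. Unset Printing Implicit Defensive.
Import GRing.Theory.
Local Open Scope ring_scope.

Definition supp (F : fieldType) (k : nat) (x : 'rV[F]_k) : {set 'I_k} :=
  [set i | x 0 i != 0].

Definition unitv (F : fieldType) (k : nat) (j : 'I_k) : 'rV[F]_k := delta_mx 0 j.
Arguments unitv F {k} j.

Definition inX (F : fieldType) (k : nat) (T : {set 'I_k}) (x : 'rV[F]_k) : bool :=
  supp x :&: T == set0.

Definition inY (F : finFieldType) (k n : nat) (T : {set 'I_k})
    (V : 'I_n -> 'rV[F]_k) (x : 'rV[F]_k) : bool :=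
  (#|supp x :&: T| == 1%N) &&
  ~~ [exists i : 'I_n, exists j in T, exists lam : F, exists c : F,
        [&& lam != 0, c != 0 & x == c *: (V i + lam *: unitv F j)]].

Definition inZ (F : fieldType) (k : nat) (T : {set 'I_k}) (x : 'rV[F]_k) : bool :=
  (#|supp x| == 2%N) && (supp x \subset T).

Definition inM (F : finFieldType) (k n : nat) (T : {set 'I_k})
    (V : 'I_n -> 'rV[F]_k) (x : 'rV[F]_k) : bool :=
  [|| inX T x, inY T V x | inZ T x].

(* Main.v *)
Require Import Defs.
From HB Require Import structures.
From mathcomp Require Import all_boot all_order all_algebra.
From mathcomp Require Import ring zify.
Import GRing.Theory.
Local Open Scope ring_scope.

Lemma key_split (F : fieldType) (k m : nat) (T : {set 'I_k}) (U : 'M[F]_k) :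
  #|T| = m -> \rank U = m ->
  (exists2 x : 'rV[F]_k, (x <= U)%MS & x != 0 /\ forall t, t \in T -> x 0 t = 0) \/
  (forall j, j \in T -> exists w : 'rV[F]_k,
      (w <= U)%MS /\ forall t, t \in T -> w 0 t = (t == j)%:R).
Proof.
move=> HT rU.
pose A := \matrix_(i < k, l < #|T|) ((i == enum_val l)%:R : F).
have E (x : 'rV[F]_k) l : (x *m A) 0 l = x 0 (enum_val l).
  rewrite !mxE (bigD1 (enum_val l)) //= mxE eqxx mulr1 big1 ?addr0 //.
  by move=> i /negbTE Hi; rewrite mxE Hi mulr0.
have HA (x : 'rV[F]_k) : (x *m A = 0) <-> (forall t, t \in T -> x 0 t = 0).
  split.
    move=> H t Ht; have := congr1 (fun M : 'M[F]_(1, #|T|) => M 0 (@enum_rank_in _ t T Ht t)) H.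
    by rewrite E mxE enum_rankK_in.
  by move=> H; apply/rowP => l; rewrite E mxE H // enum_valP.
pose K := kermx A.
case: (eqVneq (U :&: K)%MS 0) => UK.
  right.
  have rK : \rank (U + K)%MS = k.
    apply/eqP; rewrite eqn_leq rank_leq_col /= mxrank_disjoint_sum // rU.
    rewrite /K mxrank_ker.
    have h1 := rank_leq_col A.
    have h2 : (#|T| <= k)%N by rewrite -[X in (_ <= X)%N]card_ord max_card.
    lia.
  move=> j Hj.
  have : ((delta_mx 0 j : 'rV[F]_k) <= U + K)%MS by apply: submx_full; rewrite /row_full rK.
  case/sub_addsmxP => u Eu.
  exists (u.1 *m U); split; first exact: submxMl.
  move=> t Ht.
  have Hz : (u.2 *m K) *m A = 0 by apply/sub_kermxP; exact: submxMl.
  have := (proj1 (HA _) Hz) t Ht.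
  have -> : u.1 *m U = delta_mx 0 j - u.2 *m K by rewrite Eu addrK.
  by rewrite !mxE => ->; rewrite subr0 eqxx.
left. case/rowV0Pn: UK => v; rewrite sub_capmx => /andP[vU vK] nz.
exists v => //; split => //; apply/HA; exact/sub_kermxP.
Qed.

Theorem mainTheorem16 (F : finFieldType) (k m : nat)
    (Hm1 : (1 <= m)%N) (Hmk : (m <= k - 1)%N)
    (T : {set 'I_k}) (HT : #|T| = m)
    (V : 'I_(m - 1) -> 'rV[F]_k)
    (HV0 : forall i, V i != 0)
    (HVdist : forall i j, i != j -> forall c : F, V i != c *: V j)
    (HVsupp : forall i, supp (V i) :&: T = set0) :
  forall U : 'M[F]_k, \rank U = m ->
    exists x : 'rV[F]_k, [/\ x != 0, (x <= U)%MS & inM T V x].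
Proof.
move=> U rU.
case: (@key_split _ _ _ _ _ HT rU) => [[x xU [nz Hx]] | Hw].
  exists x; split => //; rewrite /inM /inX; apply/orP; left.
  apply/eqP/setP => t; rewrite !inE; case: (boolP (t \in T)) => Ht.
    by rewrite Hx // eqxx.
  by rewrite andbF.
have [w Hw'] : exists w : 'I_k -> 'rV[F]_k, forall j, j \in T ->
    (w j <= U)%MS /\ forall t, t \in T -> w j 0 t = (t == j)%:R.
  apply: (fin_all_exists (P := fun j (w : 'rV[F]_k) => j \in T ->
    (w <= U)%MS /\ forall t, t \in T -> w 0 t = (t == j)%:R)) => j.
  case: (boolP (j \in T)) => Hj; last by exists 0.
  by have [w' ?] := Hw j Hj; exists w'.
have wnz j : j \in T -> w j != 0.
  move=> Hj; apply/eqP => E; have := (proj2 (Hw' j Hj)) j Hj.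
  by rewrite E mxE eqxx => /eqP; rewrite eq_sym oner_eq0.
have Hsupp j : j \in T -> supp (w j) :&: T = [set j].
  move=> Hj; apply/setP => t; rewrite !inE.
  case: (boolP (t \in T)) => Ht; last first.
    by rewrite andbF; apply/esym/negbTE; apply: contraNneq Ht => ->.
  rewrite andbT (proj2 (Hw' j Hj)) //.
  by case: (t == j); rewrite ?oner_eq0 ?eqxx.
case: (boolP [exists j in T, inY T V (w j)]) => [/existsP [j /andP [Hj Hy]] | Hno].
  exists (w j); split; [exact: wnz | exact: (proj1 (Hw' j Hj)) | ].
  by rewrite /inM Hy orbT.
have [f Hf] : exists f : 'I_k -> option 'I_(m-1), forall j, j \in T ->
    exists i, f j = Some i /\ exists j0 lam c, [/\ j0 \in T, lam != 0, c != 0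
      & w j = c *: (V i + lam *: unitv F j0)].
  apply: (fin_all_exists (P := fun j (o : option 'I_(m-1)) => j \in T ->
    exists i, o = Some i /\ exists j0 lam c, [/\ j0 \in T, lam != 0, c != 0
      & w j = c *: (V i + lam *: unitv F j0)])) => j.
  case: (boolP (j \in T)) => Hj; last by exists None.
  move: Hno; rewrite negb_exists => /forallP /(_ j); rewrite Hj /= /inY.
  rewrite Hsupp // cards1 eqxx /= negbK.
  case/existsP => i /existsP [j0 /andP [Hj0 /existsP [lam /existsP [c /and3P [Hl Hc /eqP E]]]]].
  by exists (Some i) => _; exists i; split => //; exists j0, lam, c.
have : ~~ dinjectiveb f T.
  apply/negP => /dinjectiveP inj.
  have sub : f @: T \subset [set~ None].
    apply/subsetP => o /imsetP [j Hj ->]; have [i [-> _]] := Hf j Hj.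
    by rewrite !inE.
  have := subset_leq_card sub; rewrite cardsC1 card_option card_ord.
  rewrite (card_in_imset inj) HT => le; lia.
case/dinjectivePn => j Hj [j' Hj'' Efj].
move: Hj''; rewrite !inE => /andP [Hjj' Hj'].
have [i [Ei [j0 [lam [c [Hj0 Hl Hc Ewj]]]]]] := Hf j Hj.
have [i' [Ei' [j0' [lam' [c' [Hj0' Hl' Hc' Ewj']]]]]] := Hf j' Hj'.
have ii : i' = i by move: Efj; rewrite Ei Ei' => [[]].
subst i'.
pose x := c' *: w j + (- c) *: w j'.
have xval t : x 0 t = if t \in T then c' * (t == j)%:R - c * (t == j')%:R else 0.
  rewrite /x !mxE; case: ifP => Ht.
    rewrite (proj2 (Hw' _ Hj)) // (proj2 (Hw' _ Hj')) //; ring.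
  have tj0 : (t == j0) = false by apply/eqP => E; rewrite E Hj0 in Ht.
  have tj0' : (t == j0') = false by apply/eqP => E; rewrite E Hj0' in Ht.
  rewrite Ewj Ewj' /unitv !mxE eqxx tj0 tj0' /=; ring.
have jj' : (j == j') = false by apply/negbTE; rewrite eq_sym.
exists x; split.
- apply/eqP => E; have := xval j; rewrite E mxE Hj eqxx jj' mulr1 mulr0 subr0.
  by move=> /esym /eqP; rewrite (negbTE Hc').
- apply: addmx_sub; apply: scalemx_sub.
    exact: (proj1 (Hw' j Hj)).
  exact: (proj1 (Hw' j' Hj')).
- rewrite /inM; apply/orP; right; apply/orP; right.
  have Sx : supp x = [set j; j'].
    apply/setP => t; rewrite /supp !inE xval; case: ifP => Ht.
      case: (eqVneq t j) => [->|tj].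
        by rewrite ?eqxx ?jj' /= mulr1 mulr0 subr0 Hc'.
      case: (eqVneq t j') => [Et|tj'].
        by subst t; rewrite /= mulr1 mulr0 sub0r oppr_eq0 Hc.
      by rewrite !mulr0 subr0 eqxx.
    rewrite eqxx /=; apply/esym/negbTE; rewrite negb_or.
    by apply/andP; split; apply/eqP => E; rewrite E ?Hj ?Hj' in Ht.
  rewrite /inZ Sx cards2 jj' /=.
  by apply/subsetP => t; rewrite !inE => /orP [] /eqP ->.
Qed.
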